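(* Let $\mathbf{P}=[\mathbf{Q}_1\ \mathbf{Q}_2]\in\mathbb{R}^{n\times d}$ with $\mathbf{Q}_1\in\mathbb{R}^{n\times d'}$, $\mathbf{Q}_2\in\mathbb{R}^{n\times d''}$, $d=d'+d''$. If one of $\mathbf{Q}_1,\mathbf{Q}_2$ is (sufficiently) node-identifying, then $\mathbf{P}$ is (sufficiently) node-identifying. If one of $\mathbf{Q}_1,\mathbf{Q}_2$ is (sufficiently) adjacency-identifying, then $\mathbf{P}$ is (sufficiently) adjacency-identifying. If $\mathbf{Q}_1$ is (sufficiently) node-identifying and $\mathbf{Q}_2$ is (sufficiently) adjacency-identifying, or vice versa, then $\mathbf{P}$ is (sufficiently) node- and adjacency-identifying.
   Context: $G$ is a graph with $n$ nodes and adjacency matrix $\mathbf{A}(G)$; $d_k>0$ is a fixed constant. A matrix $\mathbf{R}\in\mathbb{R}^{n\times e}$ is node-identifying if there exist $\mathbf{W}^Q,\mathbf{W}^K\in\mathbb{R}^{e\times e}$ such that $\tilde{\mathbf{R}}=\frac{1}{\sqrt{d_k}}\mathbf{R}\mathbf{W}^Q(\mathbf{R}\mathbf{W}^K)^T$ satisfies $\tilde{\mathbf{R}}_{ij}=\max_k\tilde{\mathbf{R}}_{ik}\iff i=j$; adjacency-identifying if for some such matrices $\tilde{\mathbf{R}}_{ij}=\max_k\tilde{\mathbf{R}}_{ik}\iff\mathbf{A}(G)_{ij}=1$; node- and adjacency-identifying if it is both (possibly with different projection matrices). A matrix depending on learnable parameters is sufficiently node-identifying (resp. adjacency-identifying)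 if there is a node-identifying (resp. adjacency-identifying) matrix $\mathbf{R}^*$ such that for every $\varepsilon>0$ some parameter choice makes it lie within Frobenius distance $\varepsilon$ of $\mathbf{R}^*$. The parenthetical ''(sufficiently)'' is to be read consistently throughout each sentence: either all occurrences or none. *)

(* Defs.v *)
From HB Require Import structures.
From mathcomp Require Import all_boot all_order all_algebra.
From mathcomp Require Import reals.
Set Implicit Arguments. Unset Strict Implicit. Unset Printing Implicit Defensive.
Import Order.TTheory GRing.Theory Num.Theory.
Local Open Scope ring_scope.

Section Defs.
Variable R : realType.

Definition adjmx (n : nat) (G : rel 'I_n) : 'M[R]_n :=
  \matrix_(i, j) (G i j)%:R.

Definition attn_scores (dk : R) (n e : nat) (X : 'M[R]_(n, e))
  (WQ WK : 'M[R]_e) : 'M[R]_n :=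
  (Num.sqrt dk)^-1 *: ((X *m WQ) *m (X *m WK)^T).

Definition is_row_max (n : nat) (M : 'M[R]_n) (i j : 'I_n) : Prop :=
  forall k : 'I_n, M i k <= M i j.

Definition node_identifying (dk : R) (n e : nat) (X : 'M[R]_(n, e)) : Prop :=
  exists WQ WK : 'M[R]_e, forall i j : 'I_n,
    is_row_max (attn_scores dk X WQ WK) i j <-> i = j.

Definition adjacency_identifying (dk : R) (n : nat) (G : rel 'I_n) (e : nat)
  (X : 'M[R]_(n, e)) : Prop :=
  exists WQ WK : 'M[R]_e, forall i j : 'I_n,
    is_row_max (attn_scores dk X WQ WK) i j <-> adjmx G i j = 1.

(* both, possibly with different projection matrices *)
Definition node_adjacency_identifying (dk : R) (n : nat) (G : rel 'I_n)
  (e : nat) (X : 'M[R]_(n, e)) : Prop :=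
  node_identifying dk X /\ adjacency_identifying dk G X.

Definition frobenius_norm (m p : nat) (M : 'M[R]_(m, p)) : R :=
  Num.sqrt (\sum_(i < m) \sum_(j < p) M i j ^+ 2).

Definition sufficiently (Theta : Type) (n e : nat)
  (Ident : 'M[R]_(n, e) -> Prop) (X : Theta -> 'M[R]_(n, e)) : Prop :=
  exists Rstar : 'M[R]_(n, e), Ident Rstar /\
    forall eps : R, 0 < eps ->
      exists th : Theta, frobenius_norm (X th - Rstar) < eps.

End Defs.

(* Main.v *)
Require Import Defs.
From HB Require Import structures.
From mathcomp Require Import all_boot all_order all_algebra.
From mathcomp Require Import reals.
From mathcomp Require Import lra.
Import Order.TTheory GRing.Theory Num.Theory.
Local Open Scope ring_scope.
Set Implicit Arguments. Unset Strict Implicit. Unset Printing Implicit Defensive.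

Section Helpers.
Variable R : realType.

Definition sqsum (m p : nat) (M : 'M[R]_(m, p)) : R :=
  \sum_(i < m) \sum_(j < p) M i j ^+ 2.

Lemma sqsum_ge0 m p (M : 'M[R]_(m, p)) : 0 <= sqsum M.
Proof. by apply: sumr_ge0 => i _; apply: sumr_ge0 => j _; apply: sqr_ge0. Qed.

Lemma sqsum_row m p1 p2 (A : 'M[R]_(m, p1)) (B : 'M[R]_(m, p2)) :
  sqsum (row_mx A B) = sqsum A + sqsum B.
Proof.
rewrite /sqsum -big_split /=; apply: eq_bigr => i _.
by rewrite big_split_ord /=; congr (_ + _); apply: eq_bigr => j _;
  rewrite ?row_mxEl ?row_mxEr.
Qed.

Lemma frob_lt m p (M : 'M[R]_(m, p)) e : 0 < e ->
  (frobenius_norm M < e) = (sqsum M < e ^+ 2).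
Proof.
move=> he; rewrite /frobenius_norm -/(sqsum M).
rewrite -[X in _ < X](@ger0_norm _ e) ?ltW // -sqrtr_sqr ltr_sqrt //.
by rewrite exprn_gt0.
Qed.

Lemma frob_row m p1 p2 (A : 'M[R]_(m, p1)) (B : 'M[R]_(m, p2)) e1 e2 :
  0 < e1 -> 0 < e2 -> frobenius_norm A < e1 -> frobenius_norm B < e2 ->
  frobenius_norm (row_mx A B) < e1 + e2.
Proof.
move=> h1 h2; rewrite !frob_lt ?addr_gt0 // sqsum_row => hA hB.
have := sqsum_ge0 A; have := sqsum_ge0 B => gA gB.
nra.
Qed.

Lemma frob0 m p e : 0 < e -> frobenius_norm (0 : 'M[R]_(m, p)) < e.
Proof.
move=> he; rewrite frob_lt // /sqsum big1 ?exprn_gt0 // => i _.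
by rewrite big1 // => j _; rewrite mxE expr0n.
Qed.

Variable dk : R.

Lemma attn_left n d1 d2 (Q1 : 'M[R]_(n, d1)) (Q2 : 'M[R]_(n, d2)) W K :
  attn_scores dk (row_mx Q1 Q2) (block_mx W 0 0 0) (block_mx K 0 0 0)
  = attn_scores dk Q1 W K.
Proof.
rewrite /attn_scores !mul_row_block ?mulmx0 ?mul0mx ?addr0 ?add0r tr_row_mx.
by rewrite mul_row_col ?trmx0 ?mulmx0 ?addr0 ?add0r.
Qed.

Lemma attn_right n d1 d2 (Q1 : 'M[R]_(n, d1)) (Q2 : 'M[R]_(n, d2)) W K :
  attn_scores dk (row_mx Q1 Q2) (block_mx 0 0 0 W) (block_mx 0 0 0 K)
  = attn_scores dk Q2 W K.
Proof.
rewrite /attn_scores !mul_row_block ?mulmx0 ?mul0mx ?addr0 ?add0r tr_row_mx.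
by rewrite mul_row_col ?trmx0 ?mulmx0 ?addr0 ?add0r.
Qed.

Lemma node_row n d1 d2 (Q1 : 'M[R]_(n, d1)) (Q2 : 'M[R]_(n, d2)) :
  node_identifying dk Q1 \/ node_identifying dk Q2 ->
  node_identifying dk (row_mx Q1 Q2).
Proof.
case=> -[W [K H]].
  by exists (block_mx W 0 0 0), (block_mx K 0 0 0); rewrite attn_left.
by exists (block_mx 0 0 0 W), (block_mx 0 0 0 K); rewrite attn_right.
Qed.

Lemma adj_row n (G : rel 'I_n) d1 d2 (Q1 : 'M[R]_(n, d1)) (Q2 : 'M[R]_(n, d2)) :
  adjacency_identifying dk G Q1 \/ adjacency_identifying dk G Q2 ->
  adjacency_identifying dk G (row_mx Q1 Q2).
Proof.
case=> -[W [K H]].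
  by exists (block_mx W 0 0 0), (block_mx K 0 0 0); rewrite attn_left.
by exists (block_mx 0 0 0 W), (block_mx 0 0 0 K); rewrite attn_right.
Qed.

Lemma suff_row (T1 T2 : Type) (t1 : T1) (t2 : T2) n d1 d2
  (Q1 : T1 -> 'M[R]_(n, d1)) (Q2 : T2 -> 'M[R]_(n, d2))
  (I1 : 'M[R]_(n, d1) -> Prop) (I2 : 'M[R]_(n, d2) -> Prop)
  (I : 'M[R]_(n, d1 + d2) -> Prop) :
  (forall A B, I1 A -> I2 B -> I (row_mx A B)) ->
  sufficiently I1 Q1 -> sufficiently I2 Q2 ->
  sufficiently I (fun th : T1 * T2 => row_mx (Q1 th.1) (Q2 th.2)).
Proof.
move=> HI [R1 [h1 a1]] [R2 [h2 a2]]; exists (row_mx R1 R2); split; first exact: HI.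
move=> e he.
have he2 : 0 < e / 2 by rewrite divr_gt0.
have [s1 hs1] := a1 _ he2; have [s2 hs2] := a2 _ he2.
exists (s1, s2) => /=.
rewrite opp_row_mx add_row_mx [e](splitr e).
exact: frob_row.
Qed.

Lemma suff_rowl (T1 T2 : Type) (t1 : T1) (t2 : T2) n d1 d2
  (Q1 : T1 -> 'M[R]_(n, d1)) (Q2 : T2 -> 'M[R]_(n, d2))
  (I1 : 'M[R]_(n, d1) -> Prop)
  (I : 'M[R]_(n, d1 + d2) -> Prop) :
  (forall A B, I1 A -> I (row_mx A B)) ->
  sufficiently I1 Q1 ->
  sufficiently I (fun th : T1 * T2 => row_mx (Q1 th.1) (Q2 th.2)).
Proof.
move=> HI hs; apply: (@suff_row _ _ t1 t2 _ _ _ Q1 Q2 I1 (fun B => B = Q2 t2)) => //.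
- by move=> A B hA _; exact: HI.
- exists (Q2 t2); split => // e he; exists t2; rewrite subrr; exact: frob0.
Qed.

Lemma suff_rowr (T1 T2 : Type) (t1 : T1) (t2 : T2) n d1 d2
  (Q1 : T1 -> 'M[R]_(n, d1)) (Q2 : T2 -> 'M[R]_(n, d2))
  (I2 : 'M[R]_(n, d2) -> Prop)
  (I : 'M[R]_(n, d1 + d2) -> Prop) :
  (forall A B, I2 B -> I (row_mx A B)) ->
  sufficiently I2 Q2 ->
  sufficiently I (fun th : T1 * T2 => row_mx (Q1 th.1) (Q2 th.2)).
Proof.
move=> HI hs; apply: (@suff_row _ _ t1 t2 _ _ _ Q1 Q2 (fun A => A = Q1 t1) I2) => //.
- by move=> A B _ hB; exact: HI.
- exists (Q1 t1); split => // e he; exists t1; rewrite subrr; exact: frob0.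
Qed.

End Helpers.

Theorem lemmaF11 (R : realType) (dk : R) (hdk : 0 < dk)
  (n : nat) (G : rel 'I_n) (d1 d2 : nat) :
  (* plain version: fixed matrices Q1, Q2, P = [Q1 Q2] *)
  (forall (Q1 : 'M[R]_(n, d1)) (Q2 : 'M[R]_(n, d2)),
     ((node_identifying dk Q1 \/ node_identifying dk Q2) ->
        node_identifying dk (row_mx Q1 Q2)) /\
     ((adjacency_identifying dk G Q1 \/ adjacency_identifying dk G Q2) ->
        adjacency_identifying dk G (row_mx Q1 Q2)) /\
     ((node_identifying dk Q1 /\ adjacency_identifying dk G Q2) \/
      (adjacency_identifying dk G Q1 /\ node_identifying dk Q2) ->
        node_adjacency_identifying dk G (row_mx Q1 Q2))) /\
  (* "sufficiently" version: Q1, Q2 depend on (independent, nonempty)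
     learnable parameters, P depends on both *)
  (forall (Theta1 Theta2 : Type) (th1 : Theta1) (th2 : Theta2)
          (Q1 : Theta1 -> 'M[R]_(n, d1)) (Q2 : Theta2 -> 'M[R]_(n, d2)),
     let P := fun th : Theta1 * Theta2 => row_mx (Q1 th.1) (Q2 th.2) in
     ((sufficiently (@node_identifying R dk n d1) Q1 \/
       sufficiently (@node_identifying R dk n d2) Q2) ->
        sufficiently (@node_identifying R dk n (d1 + d2)) P) /\
     ((sufficiently (@adjacency_identifying R dk n G d1) Q1 \/
       sufficiently (@adjacency_identifying R dk n G d2) Q2) ->
        sufficiently (@adjacency_identifying R dk n G (d1 + d2)) P) /\
     ((sufficiently (@node_identifying R dk n d1) Q1 /\
       sufficiently (@adjacency_identifying R dk n G d2) Q2) \/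
      (sufficiently (@adjacency_identifying R dk n G d1) Q1 /\
       sufficiently (@node_identifying R dk n d2) Q2) ->
        sufficiently (@node_adjacency_identifying R dk n G (d1 + d2)) P)).
Proof.
split.
  move=> Q1 Q2; split; first exact: node_row.
  split; first exact: adj_row.
  case=> -[h1 h2]; split.
  - by apply: node_row; left.
  - by apply: adj_row; right.
  - by apply: node_row; right.
  - by apply: adj_row; left.
move=> T1 T2 t1 t2 Q1 Q2 P; split.
  case=> h.
    by apply: (suff_rowl t1 t2 _ _ h) => A B hA; apply: node_row; left.
  by apply: (suff_rowr t1 t2 _ _ h) => A B hB; apply: node_row; right.
split.
  case=> h.
    by apply: (suff_rowl t1 t2 _ _ h) => A B hA; apply: adj_row; left.
  by apply: (suff_rowr t1 t2 _ _ h) => A B hB; apply: adj_row; right.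
case=> -[h1 h2].
  apply: (suff_row t1 t2 _ h1 h2) => A B hA hB; split.
    by apply: node_row; left.
  by apply: adj_row; right.
apply: (suff_row t1 t2 _ h1 h2) => A B hA hB; split.
  by apply: node_row; right.
by apply: adj_row; left.
Qed.
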